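(* Let $((\mathcal G,\Theta),\mathfrak g_1,\mathfrak g_2)$ be a twilled Lie triple system and $H:\mathfrak g_2\to\mathfrak g_1$ a linear map. Then the twisting $((\mathcal G,\Theta^H),\mathfrak g_1,\mathfrak g_2)$ is also a twilled Lie triple system (i.e. $\mathfrak g_1$ and $\mathfrak g_2$ are subalgebras for the bracket $\Theta^H$) if and only if $H\in C^0_{\mathsf{LTS}}(\mathfrak g_2,\mathfrak g_1)$ is a Maurer–Cartan element of the $L_\infty$-algebra $(C^*_{\mathsf{LTS}}(\mathfrak g_2,\mathfrak g_1),l_1,l_2,l_3)$, i.e. $$l_1(H)+\tfrac12 l_2(H,H)+\tfrac1{3!}l_3(H,H,H)=0,$$ where $l_1(f)=[\hat\mu_2,\hat f]_{\mathsf{LTS}}$, $l_2(f,g)=[[\hat\psi,\hat f]_{\mathsf{LTS}},\hat g]_{\mathsf{LTS}}$, $l_3(f,g,h)=[[[\hat\mu_1,\hat f]_{\mathsf{LTS}},\hat g]_{\mathsf{LTS}},\hat h]_{\mathsf{LTS}}$.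
   Context: All vector spaces are over a field $\mathbb K$ of characteristic $0$. A Lie triple system is a vector space with a trilinear bracket $[\cdot,\cdot,\cdot]$ satisfying $[x,x,y]=0$, $[x,y,z]+[y,z,x]+[z,x,y]=0$ and $[x,y,[z,w,t]]=[[x,y,z],w,t]+[z,[x,y,w],t]+[z,w,[x,y,t]]$; a subalgebra is a subspace closed under the bracket. Cochains: $C^p(\mathfrak g,\mathfrak g)=\mathrm{Hom}(\otimes^{2p+1}\mathfrak g,\mathfrak g)$ (degree $p$), arguments written $(\mathfrak X_1,\dots,\mathfrak X_p,x)$, $\mathfrak X_i=x_i\otimes y_i$. For $P\in C^p,Q\in C^q$: $(P\circ Q)(\mathfrak X_1,\dots,\mathfrak X_{p+q},x)=\sum_{k=1}^p(-1)^{(k-1)q}\sum_{\sigma\in\mathbb S(k-1,q)}(-1)^\sigma P(\mathfrak X_{\sigma(1)},\dots,\mathfrak X_{\sigma(k-1)},Q(\mathfrak X_{\sigma(k)},\dots,\mathfrak X_{\sigma(k+q-1)},x_{k+q})\otimes y_{k+q},\mathfrak X_{k+q+1},\dots,\mathfrak X_{p+q},x)+\sum_{k=1}^p(-1)^{(k-1)q}\sum_{\sigma\in\mathbb S(k-1,q)}(-1)^\sigma P(\mathfrak X_{\sigma(1)},\dots,\mathfrak X_{\sigma(k-1)},x_{k+q}\otimes Q(\mathfrak X_{\sigma(k)},\dots,\mathfrak X_{\sigma(k+q-1)},y_{k+q}),\mathfrak X_{k+q+1},\dots,\mathfrak X_{p+q},x)+\sum_{\sigma\in\mathbb S(p,q)}(-1)^\sigma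 P(\mathfrak X_{\sigma(1)},\dots,\mathfrak X_{\sigma(p)},Q(\mathfrak X_{\sigma(p+1)},\dots,\mathfrak X_{\sigma(p+q)},x))$ ($\mathbb S(i,j)$ = shuffles), $[P,Q]=P\circ Q-(-1)^{pq}Q\circ P$. $C^p_{\mathsf{LTS}}$ is the subspace of $P$ with $P(\dots,x,x,y)=0$ and vanishing cyclic sum in the last three arguments ($C^0_{\mathsf{LTS}}=\mathrm{Hom}(\mathfrak g,\mathfrak g)$), a graded Lie subalgebra with bracket $[\cdot,\cdot]_{\mathsf{LTS}}$; $\Theta\in C^1_{\mathsf{LTS}}$ is a Lie triple system bracket iff $[\Theta,\Theta]_{\mathsf{LTS}}=0$. $C^p_{\mathsf{LTS}}(\mathfrak g_2,\mathfrak g_1)$: maps $\otimes^{2p+1}\mathfrak g_2\to\mathfrak g_1$ with the same symmetries; its lift $\hat f$ to $\mathcal G=\mathfrak g_1\oplus\mathfrak g_2$ equals $f$ on $\otimes^{2p+1}\mathfrak g_2$ and vanishes on all other tensor summands; e.g. for $H:\mathfrak g_2\to\mathfrak g_1$, $\hat H(x,u)=(H(u),0)$. Twilled Lie triple system: Lie triple system $(\mathcal G,\Theta=[\cdot,\cdot,\cdot]_{\mathcal G})$, $\mathcal G=\mathfrak g_1\oplus\mathfrak g_2$, with $\mathfrak g_1,\mathfrak g_2$ subalgebras. With $[a,b,c]_i$ the $\mathfrak g_i$-component and $x,y,z\in\mathfrak g_1$, $u,v,w\in\mathfrak g_2$: $\hat\mu_1((x,u),(y,v),(z,w))=([x,y,z]_1,[x,y,w]_2+[u,y,z]_2-[v,x,z]_2)$,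 $\hat\psi((x,u),(y,v),(z,w))=([x,y,w]_1+[u,y,z]_1-[v,x,z]_1,[u,v,z]_2+[x,v,w]_2-[y,u,w]_2)$, $\hat\mu_2((x,u),(y,v),(z,w))=([u,v,z]_1+[x,v,w]_1-[y,u,w]_1,[u,v,w]_2)$. Twisting: $X_{\hat H}(\cdot)=[\cdot,\hat H]_{\mathsf{LTS}}$ and $\Theta^H=\sum_{k\ge0}\frac1{k!}X_{\hat H}^k(\Theta)$ (a finite sum). $L_\infty$-algebra: graded space with graded-symmetric degree $+1$ maps $l_k$ satisfying the generalized Jacobi identities; here $C^p_{\mathsf{LTS}}(\mathfrak g_2,\mathfrak g_1)$ has degree $p$, $l_k=0$ for $k\ge4$, and the values of $l_1,l_2,l_3$ (lifts of maps $\otimes^\bullet\mathfrak g_2\to\mathfrak g_1$) are identified with elements of $C^*_{\mathsf{LTS}}(\mathfrak g_2,\mathfrak g_1)$. A Maurer–Cartan element is a degree-$0$ element $\alpha$ with $\sum_k\frac1{k!}l_k(\alpha,\dots,\alpha)=0$. *)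

(* Defs.v *)
From HB Require Import structures.
From mathcomp Require Import all_boot all_order all_algebra.
Set Implicit Arguments. Unset Strict Implicit. Unset Printing Implicit Defensive.
Import Order.TTheory GRing.Theory Num.Theory.
Local Open Scope ring_scope.

Section LTS.
Variable K : fieldType.

Definition trilinear (V W : lmodType K) (f : V -> V -> V -> W) : Prop :=
  (forall (k : K) u v b c, f (k *: u + v) b c = k *: f u b c + f v b c) /\
  (forall (k : K) a u v c, f a (k *: u + v) c = k *: f a u c + f a v c) /\
  (forall (k : K) a b u v, f a b (k *: u + v) = k *: f a b u + f a b v).

Definition is_LTS (V : lmodType K) (br : V -> V -> V -> V) : Prop :=
  trilinear br /\
  (forall x y, br x x y = 0) /\
  (forall x y z, br x y z + br y z x + br z x y = 0) /\
  (forall x y z w t,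
      br x y (br z w t) = br (br x y z) w t + br z (br x y w) t + br z w (br x y t)).

Definition subalgebra (V : lmodType K) (br : V -> V -> V -> V) (S : V -> Prop) : Prop :=
  S 0 /\ (forall (k : K) u v, S u -> S v -> S (k *: u + v)) /\
  (forall a b c, S a -> S b -> S c -> S (br a b c)).

Variables g1 g2 : lmodType K.
Local Notation G := (g1 * g2)%type.

Definition tri_op := G -> G -> G -> G.

Definition in_g1 (a : G) : Prop := a.2 = 0.
Definition in_g2 (a : G) : Prop := a.1 = 0.

Definition twilled (Th : tri_op) : Prop :=
  is_LTS Th /\ subalgebra Th in_g1 /\ subalgebra Th in_g2.

Definition hat (H : g2 -> g1) : G -> G := fun a => (H a.2, 0).

(* the bracket [P,Q]_LTS for P in C^1 and Q in C^0 (unfolded from the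
   general formula: P∘Q - Q∘P) *)
Definition br10 (P : tri_op) (Q : G -> G) : tri_op :=
  fun a b c => P (Q a) b c + P a (Q b) c + P a b (Q c) - Q (P a b c).

Definition XH (H : g2 -> g1) (P : tri_op) : tri_op := br10 P (hat H).

(* Theta^H = sum_k 1/k! X_H^k(Theta); terms with k >= 4 vanish *)
Definition twist (Th : tri_op) (H : g2 -> g1) : tri_op :=
  fun a b c => \sum_(k < 4) ((k`!)%:R)^-1 *: iter k (XH H) Th a b c.

Definition emb1 (x : g1) : G := (x, 0).
Definition emb2 (u : g2) : G := (0, u).

Definition mu1 (Th : tri_op) : tri_op := fun a b c =>
  let: (x, u) := a in let: (y, v) := b in let: (z, w) := c in
  ((Th (emb1 x) (emb1 y) (emb1 z)).1,
   (Th (emb1 x) (emb1 y) (emb2 w)).2 + (Th (emb2 u) (emb1 y) (emb1 z)).2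
     - (Th (emb2 v) (emb1 x) (emb1 z)).2).

Definition psi (Th : tri_op) : tri_op := fun a b c =>
  let: (x, u) := a in let: (y, v) := b in let: (z, w) := c in
  ((Th (emb1 x) (emb1 y) (emb2 w)).1 + (Th (emb2 u) (emb1 y) (emb1 z)).1
     - (Th (emb2 v) (emb1 x) (emb1 z)).1,
   (Th (emb2 u) (emb2 v) (emb1 z)).2 + (Th (emb1 x) (emb2 v) (emb2 w)).2
     - (Th (emb1 y) (emb2 u) (emb2 w)).2).

Definition mu2 (Th : tri_op) : tri_op := fun a b c =>
  let: (x, u) := a in let: (y, v) := b in let: (z, w) := c in
  ((Th (emb2 u) (emb2 v) (emb1 z)).1 + (Th (emb1 x) (emb2 v) (emb2 w)).1
     - (Th (emb1 y) (emb2 u) (emb2 w)).1,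
   (Th (emb2 u) (emb2 v) (emb2 w)).2).

(* the L_infinity brackets (values as lifted maps on G) *)
Definition l1 (Th : tri_op) (f : g2 -> g1) : tri_op := br10 (mu2 Th) (hat f).
Definition l2 (Th : tri_op) (f g : g2 -> g1) : tri_op :=
  br10 (br10 (psi Th) (hat f)) (hat g).
Definition l3 (Th : tri_op) (f g h : g2 -> g1) : tri_op :=
  br10 (br10 (br10 (mu1 Th) (hat f)) (hat g)) (hat h).

Definition maurer_cartan (Th : tri_op) (H : g2 -> g1) : Prop :=
  forall a b c : G,
    l1 Th H a b c + (2%:R)^-1 *: l2 Th H H a b c
      + ((3`!)%:R)^-1 *: l3 Th H H H a b c = 0.

End LTS.

(* Main.v *)
Require Import Defs.
From HB Require Import structures.
From mathcomp Require Import all_boot all_order all_algebra.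
From Stdlib Require Import FunctionalExtensionality.
Import GRing.Theory.
Local Open Scope ring_scope.

Inductive zex := ZAt of nat | ZAdd of zex & zex | ZOpp of zex | Z0.
Section Z.
Variable V : zmodType.
Fixpoint zev (env : seq V) e := match e with
  | ZAt i => nth 0 env i | ZAdd a b => zev env a + zev env b
  | ZOpp a => - zev env a | Z0 => 0 end.
Fixpoint zfl (e : zex) : seq (bool * nat) := match e with
  | ZAt i => [:: (true, i)] | ZAdd a b => zfl a ++ zfl b
  | ZOpp a => map (fun p => (~~ p.1, p.2)) (zfl a) | Z0 => [::] end.
Definition zsg (env : seq V) (p : bool * nat) :=
  if p.1 then nth 0 env p.2 else - nth 0 env p.2.
Definition zden env (l : seq (bool * nat)) := \sum_(p <- l) zsg env p.
Lemma zfl_ok env e : zev env e = zden env (zfl e).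
Proof.
rewrite /zden; elim: e => [i|a iha b ihb|a iha|] /=.
- by rewrite big_seq1.
- by rewrite big_cat /= iha ihb.
- rewrite iha big_map -sumrN; apply: eq_bigr => -[[] j] _; by rewrite /zsg /= ?opprK.
- by rewrite big_nil.
Qed.
Definition zcnt b i (l : seq (bool * nat)) := count (fun p => (p.1 == b) && (p.2 == i)) l.
Lemma zden_sum env l n : all (fun p => p.2 < n)%N l ->
  zden env l = \sum_(i <- iota 0 n) (nth 0 env i *+ zcnt true i l - nth 0 env i *+ zcnt false i l).
Proof.
rewrite /zden; elim: l => [|[b j] l IH].
  move=> _; rewrite big_nil; symmetry; apply: big1_seq => i _; by rewrite /zcnt /= !mulr0n subrr.
move=> /andP[/= hj hl]; rewrite big_cons IH //.
have -> : \sum_(i <- iota 0 n) (nth 0 env i *+ zcnt true i ((b, j) :: l) -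
     nth 0 env i *+ zcnt false i ((b, j) :: l)) =
  \sum_(i <- iota 0 n) (if i == j then zsg env (b, j) else 0) +
  \sum_(i <- iota 0 n) (nth 0 env i *+ zcnt true i l - nth 0 env i *+ zcnt false i l).
{ rewrite -big_split /=; apply: eq_bigr => i _.
  rewrite /zcnt /= !mulrnDr /zsg /=.
  case: (eqVneq i j) => [->|ne]; case: b => /=; rewrite ?eqxx ?(negbTE ne) ?(eq_sym j i) ?(negbTE ne) /=;
    rewrite ?mulr0n ?mulr1n ?addr0 ?add0r.
  all: try (rewrite opprD addrA; congr (_ - _); rewrite addrC; done).
  all: try done.
  all: try (rewrite opprD addrA addrAC; done).
  all: try (rewrite addrA; done).
  all: by rewrite opprD addrA [X in _ = X]addrA [- _ + _]addrC. }
congr (_ + _).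
have := big_mkcond (fun i => i == j) (fun=> zsg env (b, j)) (r := iota 0 n) (idx := 0) (op := +%R).
move=> <-; rewrite big_const_seq.
have -> : count (fun i => i == j) (iota 0 n) = 1%N.
  by rewrite (count_uniq_mem j (iota_uniq 0 n)) mem_iota /= hj.
by rewrite /= addr0.
Qed.
Definition zcheck n l := all (fun p => p.2 < n)%N l &&
  all (fun i => zcnt true i l == zcnt false i l) (iota 0 n).

Lemma zcancel env e n : zcheck n (zfl e) -> zev env e = 0.
Proof.
case/andP=> h1 /allP h2; rewrite zfl_ok (zden_sum env _ _ h1) big1_seq // => i /h2 /eqP ->.
by rewrite subrr.
Qed.
End Z.

Ltac zidx t l := match l with
 | (t :: _) => constr:(0%N)
 | (?x :: _) => let _ := constr:(@erefl _ x : x = t) in constr:(0%N)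
 | (_ :: ?r) => let k := zidx t r in constr:(S k)
end.
Ltac zadd t l := match constr:(tt) with
 | _ => let k := zidx t l in l
 | _ => constr:(t :: l)
end.
Ltac zcollect e l := match e with
 | (?a + ?b)%R => let l1 := zcollect a l in zcollect b l1
 | (- ?a)%R => zcollect a l
 | 0%R => l
 | ?t => zadd t l
end.
Ltac zreify e l := match e with
 | (?a + ?b)%R => let x := zreify a l in let y := zreify b l in constr:(ZAdd x y)
 | (- ?a)%R => let x := zreify a l in constr:(ZOpp x)
 | 0%R => constr:(Z0)
 | ?t => let i := zidx t l in constr:(ZAt i)
end.
Ltac zcancel_tac :=
  apply: subr0_eq;
  match goal with |- ?E = 0 =>
    let V := type of E in
    let l := zcollect E (@nil V) in
    let t := zreify E l in
    change (zev _ l t = 0); apply: (@zcancel _ l t (size l)); reflexivity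
  end.


Section Work.
Variables (K : fieldType) (g1 g2 : lmodType K).
Local Notation G := (g1 * g2)%type.
Variable Th : tri_op g1 g2.
Hypothesis hL : trilinear Th.
Hypothesis hA : forall x y, Th x x y = 0.
Hypothesis h1c : forall a b c : G, a.2 = 0 -> b.2 = 0 -> c.2 = 0 -> (Th a b c).2 = 0.
Hypothesis h2c : forall a b c : G, a.1 = 0 -> b.1 = 0 -> c.1 = 0 -> (Th a b c).1 = 0.
Variable H : {linear g2 -> g1}.
Hypothesis hK : [pchar K] =i pred0.

Lemma Geq (p q : G) : p.1 = q.1 -> p.2 = q.2 -> p = q.
Proof. by case: p q => ? ? [? ?] /= -> ->. Qed.

Lemma addI0 (V : zmodType) (t : V) : t = t + t -> t = 0.
Proof. by move=> e; apply: (addrI t); rewrite addr0 -e. Qed.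

Lemma ThD1 a b c d : Th (a + b) c d = Th a c d + Th b c d.
Proof. by have := (hL.1 1 a b c d); rewrite !scale1r => ->. Qed.
Lemma ThD2 a b c d : Th c (a + b) d = Th c a d + Th c b d.
Proof. by have := (hL.2.1 1 c a b d); rewrite !scale1r => ->. Qed.
Lemma ThD3 a b c d : Th c d (a + b) = Th c d a + Th c d b.
Proof. by have := (hL.2.2 1 c d a b); rewrite !scale1r => ->. Qed.
Lemma Th01 c d : Th 0 c d = 0.
Proof. by apply: addI0; rewrite -ThD1 addr0. Qed.
Lemma Th02 c d : Th c 0 d = 0.
Proof. by apply: addI0; rewrite -ThD2 addr0. Qed.
Lemma Th03 c d : Th c d 0 = 0.
Proof. by apply: addI0; rewrite -ThD3 addr0. Qed.
Lemma ThN1 a c d : Th (- a) c d = - Th a c d.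
Proof. by apply: (addrI (Th a c d)); rewrite -ThD1 !subrr Th01. Qed.
Lemma ThN2 a c d : Th c (- a) d = - Th c a d.
Proof. by apply: (addrI (Th c a d)); rewrite -ThD2 !subrr Th02. Qed.
Lemma ThN3 a c d : Th c d (- a) = - Th c d a.
Proof. by apply: (addrI (Th c d a)); rewrite -ThD3 !subrr Th03. Qed.
Lemma ThZ1 k a c d : Th (k *: a) c d = k *: Th a c d.
Proof. by have := (hL.1 k a 0 c d); rewrite !addr0 Th01 addr0 => ->. Qed.
Lemma ThZ2 k a c d : Th c (k *: a) d = k *: Th c a d.
Proof. by have := (hL.2.1 k c a 0 d); rewrite !addr0 Th02 addr0 => ->. Qed.
Lemma ThZ3 k a c d : Th c d (k *: a) = k *: Th c d a.
Proof. by have := (hL.2.2 k c d a 0); rewrite !addr0 Th03 addr0 => ->. Qed.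
Lemma ThS a b c : Th b a c = - Th a b c.
Proof.
apply/eqP; rewrite -addr_eq0 addrC; have := hA (a + b) c.
by rewrite ThD1 !ThD2 !hA add0r addr0 => ->.
Qed.

Lemma emb1D (x y : g1) : emb1 g2 (x + y) = emb1 g2 x + emb1 g2 y.
Proof. by apply: Geq; rewrite /emb1 //= addr0. Qed.
Lemma emb1N (x : g1) : emb1 g2 (- x) = - emb1 g2 x.
Proof. by apply: Geq; rewrite /emb1 //= oppr0. Qed.
Lemma emb10 : emb1 g2 (0 : g1) = 0.
Proof. by []. Qed.
Lemma emb2D (x y : g2) : emb2 g1 (x + y) = emb2 g1 x + emb2 g1 y.
Proof. by apply: Geq; rewrite /emb2 //= addr0. Qed.
Lemma emb2N (x : g2) : emb2 g1 (- x) = - emb2 g1 x.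
Proof. by apply: Geq; rewrite /emb2 //= oppr0. Qed.
Lemma emb20 : emb2 g1 (0 : g2) = 0.
Proof. by []. Qed.
Lemma pairE (x : g1) (u : g2) : (x, u) = emb1 g2 x + emb2 g1 u.
Proof. by apply: Geq; rewrite /emb1 /emb2 /= ?addr0 ?add0r. Qed.
Lemma emb1_1 (x : g1) : (emb1 g2 x).1 = x. Proof. by []. Qed.
Lemma emb1_2 (x : g1) : (emb1 g2 x).2 = 0. Proof. by []. Qed.
Lemma emb2_1 (x : g2) : (emb2 g1 x).1 = 0. Proof. by []. Qed.
Lemma emb2_2 (x : g2) : (emb2 g1 x).2 = x. Proof. by []. Qed.
Arguments emb1 : simpl never.
Arguments emb2 : simpl never.
Lemma fstD (p q : G) : (p + q).1 = p.1 + q.1. Proof. by []. Qed.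
Lemma fstN (p : G) : (- p).1 = - p.1. Proof. by []. Qed.
Lemma fst0 : (0 : G).1 = 0. Proof. by []. Qed.
Lemma sndD (p q : G) : (p + q).2 = p.2 + q.2. Proof. by []. Qed.
Lemma sndN (p : G) : (- p).2 = - p.2. Proof. by []. Qed.
Lemma snd0 : (0 : G).2 = 0. Proof. by []. Qed.
Lemma Th111 (x y z : g1) : (Th (emb1 g2 x) (emb1 g2 y) (emb1 g2 z)).2 = 0.
Proof. by apply: h1c. Qed.
Lemma Th222 (x y z : g2) : (Th (emb2 g1 x) (emb2 g1 y) (emb2 g1 z)).1 = 0.
Proof. by apply: h2c. Qed.

Ltac skewnorm := repeat match goal with
 | |- context [Th ?A ?B ?C] => match goal with |- context [Th B A C] =>
      tryif constr_eq A B then rewrite (hA A C) else rewrite (ThS A B C) end end.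

Ltac expand := rewrite ?pairE;
  rewrite ?(emb1D, emb1N, emb10, emb2D, emb2N, emb20, raddf0, raddfD, raddfN,
            ThD1, ThD2, ThD3, ThN1, ThN2, ThN3, Th01, Th02, Th03,
            fstD, fstN, fst0, sndD, sndN, snd0, Th111, Th222);
  skewnorm;
  rewrite ?(fstD, fstN, fst0, sndD, sndN, snd0, Th111, Th222, raddf0, raddfD, raddfN, opprK, oppr0); rewrite /=;
  rewrite ?(fstD, fstN, fst0, sndD, sndN, snd0, Th111, Th222, raddf0, raddfD, raddfN, opprK, oppr0).

Definition E1 u v w : g1 :=
  (Th (emb1 g2 (H u)) (emb2 g1 v) (emb2 g1 w)).1 + (Th (emb2 g1 u) (emb1 g2 (H v)) (emb2 g1 w)).1
  + (Th (emb2 g1 u) (emb2 g1 v) (emb1 g2 (H w))).1 - H (Th (emb2 g1 u) (emb2 g1 v) (emb2 g1 w)).2.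

Lemma C1 x u y v z w : l1 Th H (x, u) (y, v) (z, w) = (E1 u v w, 0).
Proof.
apply: Geq; rewrite /l1 /br10 /hat /mu2 /E1 /=; expand. all: zcancel_tac.
Qed.

Local Notation "[ A , B , C ]" := (Th A B C) (at level 0).
Local Notation "'E' x" := (emb1 g2 x) (at level 8).
Local Notation "'F' x" := (emb2 g1 x) (at level 8).

Definition E2 u v w : g1 :=
  [E (H u), E (H v), F w].1 + [E (H u), F v, E (H w)].1 + [F u, E (H v), E (H w)].1
  - H ([E (H u), F v, F w].2 + [F u, E (H v), F w].2 + [F u, F v, E (H w)].2).
Definition E3 u v w : g1 :=
  [E (H u), E (H v), E (H w)].1
  - H ([E (H u), E (H v), F w].2 + [E (H u), F v, E (H w)].2 + [F u, E (H v), E (H w)].2).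

Lemma C2 x u y v z w : l2 Th H H (x, u) (y, v) (z, w) = (E2 u v w + E2 u v w, 0).
Proof.
apply: Geq; rewrite /l2 /br10 /hat /psi /E2 /=; expand. all: zcancel_tac.
Qed.

Lemma C3 x u y v z w : l3 Th H H H (x, u) (y, v) (z, w) =
  (E3 u v w + E3 u v w + E3 u v w + E3 u v w + E3 u v w + E3 u v w, 0).
Proof.
apply: Geq; rewrite /l3 /br10 /hat /mu1 /E3 /=; expand. all: zcancel_tac.
Qed.

Definition Tp (a b c : G) : G :=
  Th (a + hat H a) (b + hat H b) (c + hat H c)
  - hat H (Th (a + hat H a) (b + hat H b) (c + hat H c)).

Lemma CT u v w : (Tp (emb2 g1 u) (emb2 g1 v) (emb2 g1 w)).1 = E1 u v w + E2 u v w + E3 u v w.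
Proof.
rewrite /Tp /hat /E1 /E2 /E3 /=; rewrite ?(emb1_1, emb1_2, emb2_1, emb2_2).
expand. zcancel_tac.
Qed.

Arguments hat : simpl never.
Lemma hatD p q : hat H (p + q) = hat H p + hat H q.
Proof. by apply: Geq; rewrite /hat /= ?raddfD ?addr0. Qed.
Lemma hatN p : hat H (- p) = - hat H p.
Proof. by apply: Geq; rewrite /hat /= ?raddfN ?oppr0. Qed.
Lemma hat0 : hat H 0 = 0.
Proof. by apply: Geq; rewrite /hat /= ?raddf0. Qed.
Lemma hatK p : hat H (hat H p) = 0.
Proof. by apply: Geq; rewrite /hat /= ?raddf0. Qed.
Lemma hat111 a b c : hat H (Th (hat H a) (hat H b) (hat H c)) = 0.
Proof. by apply: Geq; rewrite /hat /= ?h1c ?raddf0. Qed.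

Ltac gexpand := rewrite ?(ThD1, ThD2, ThD3, ThN1, ThN2, ThN3, Th01, Th02, Th03,
   hatD, hatN, hat0, hatK, hat111, opprK, oppr0, addr0, add0r).

Definition D2 a b c :=
  Th (hat H a) (hat H b) c + Th (hat H a) b (hat H c) + Th a (hat H b) (hat H c)
  - hat H (Th (hat H a) b c + Th a (hat H b) c + Th a b (hat H c)).
Definition D3 a b c :=
  Th (hat H a) (hat H b) (hat H c)
  - hat H (Th (hat H a) (hat H b) c + Th (hat H a) b (hat H c) + Th a (hat H b) (hat H c)).

Lemma A2 a b c : iter 2 (XH H) Th a b c = D2 a b c + D2 a b c.
Proof. rewrite /= /XH /br10 /D2 /=; gexpand; zcancel_tac. Qed.
Lemma A3 a b c : iter 3 (XH H) Th a b c =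
  D3 a b c + D3 a b c + D3 a b c + D3 a b c + D3 a b c + D3 a b c.
Proof. rewrite /= /XH /br10 /D3 /=; gexpand; zcancel_tac. Qed.
Lemma AT a b c : Tp a b c = Th a b c + br10 Th (hat H) a b c + D2 a b c + D3 a b c.
Proof. rewrite /Tp /br10 /D2 /D3 /=; gexpand; zcancel_tac. Qed.

Lemma twistE a b c : twist Th H a b c = Tp a b c.
Proof.
rewrite /twist !big_ord_recr big_ord0 /=.
have e2 : XH H (XH H Th) a b c = D2 a b c + D2 a b c := A2 a b c.
have e3 : XH H (XH H (XH H Th)) a b c =
  D3 a b c + D3 a b c + D3 a b c + D3 a b c + D3 a b c + D3 a b c := A3 a b c.
rewrite e2 e3 AT /XH.
have n0 : forall n, (n%:R == 0 :> K) = (n == 0)%N := (pcharf0P K).1 hK.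
have s2 : D2 a b c + D2 a b c = 2%:R *: D2 a b c.
  by rewrite scaler_nat !mulrS mulr0n addr0.
have s3 : D3 a b c + D3 a b c + D3 a b c + D3 a b c + D3 a b c + D3 a b c
   = 6%:R *: D3 a b c.
  by rewrite scaler_nat !mulrS mulr0n addr0 !addrA.
rewrite s2 s3 (_ : 0`! = 1)%N // (_ : 1`! = 1)%N // (_ : 2`! = 2)%N // (_ : 3`! = 6)%N //.
by rewrite invr1 !scale1r !scalerA !mulVf ?n0 // !scale1r add0r.
Qed.

Definition phi (a : G) : G := a + hat H a.
Definition psi' (r : G) : G := r - hat H r.
Lemma TpE a b c : Tp a b c = psi' (Th (phi a) (phi b) (phi c)).
Proof. by []. Qed.
Lemma hatZ k p : hat H (k *: p) = k *: hat H p.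
Proof. by apply: Geq; rewrite /hat /= ?linearZ ?scaler0. Qed.
Lemma phiL k u v : phi (k *: u + v) = k *: phi u + phi v.
Proof. rewrite /phi hatD hatZ scalerDr; zcancel_tac. Qed.
Lemma psiL k u v : psi' (k *: u + v) = k *: psi' u + psi' v.
Proof. rewrite /psi' hatD hatZ scalerDr scalerN; zcancel_tac. Qed.
Lemma psiD u v : psi' (u + v) = psi' u + psi' v.
Proof. by have := psiL 1 u v; rewrite !scale1r. Qed.
Lemma psi0 : psi' 0 = 0.
Proof. by rewrite /psi' hat0 subr0. Qed.
Lemma phipsi r : phi (psi' r) = r.
Proof. rewrite /phi /psi' hatD hatN hatK; zcancel_tac. Qed.

Lemma Tp_LTS : is_LTS Th -> is_LTS Tp.
Proof.
case=> [[t1 [t2 t3]] [tA [tC tJ]]]; split; [split; [|split]|split; [|split]].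
- by move=> k u v b c; rewrite !TpE phiL t1 psiL.
- by move=> k a u v c; rewrite !TpE phiL t2 psiL.
- by move=> k a b u v; rewrite !TpE phiL t3 psiL.
- by move=> x y; rewrite TpE tA psi0.
- by move=> x y z; rewrite !TpE -!psiD tC psi0.
- move=> x y z w t; rewrite !TpE !phipsi tJ -!psiD //.
Qed.

Lemma Tp_g1 : subalgebra Th (@in_g1 K g1 g2) -> subalgebra Tp (@in_g1 K g1 g2).
Proof.
case=> s0 [sL sC]; split => //; split => // a b c ha hb hc.
have e : forall p : G, p.2 = 0 -> phi p = p.
  by move=> p hp; rewrite /phi (_ : hat H p = 0) ?addr0 //; by rewrite /hat hp raddf0.
rewrite /in_g1 TpE !e //= (sC a b c ha hb hc) /hat /= subr0 //.
Qed.

Lemma MCE a b c : l1 Th H a b c + (2%:R)^-1 *: l2 Th H H a b c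
   + ((3`!)%:R)^-1 *: l3 Th H H H a b c
  = ((Tp (emb2 g1 a.2) (emb2 g1 b.2) (emb2 g1 c.2)).1, 0).
Proof.
case: a b c => x u [y v] [z w]; rewrite C1 C2 C3 CT /=.
have n0 : forall n, (n%:R == 0 :> K) = (n == 0)%N := (pcharf0P K).1 hK.
apply: Geq => /=; last by rewrite !scaler0 !addr0.
have s2 : E2 u v w + E2 u v w = 2%:R *: E2 u v w.
  by rewrite scaler_nat !mulrS mulr0n addr0.
have s3 : E3 u v w + E3 u v w + E3 u v w + E3 u v w + E3 u v w + E3 u v w
   = 6%:R *: E3 u v w.
  by rewrite scaler_nat !mulrS mulr0n addr0 !addrA.
rewrite s2 s3 (_ : 3`! = 6)%N //.
by rewrite !scalerA !mulVf ?n0 // !scale1r.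
Qed.

Lemma main_sec : is_LTS Th -> subalgebra Th (@in_g1 K g1 g2) ->
  (twilled (twist Th H) <-> maurer_cartan Th H).
Proof.
move=> hLTS hg1.
have eT : twist Th H = Tp.
  apply: functional_extensionality => a; apply: functional_extensionality => b.
  apply: functional_extensionality => c; exact: twistE.
rewrite /twilled eT; split.
- case=> _ [_ [_ [_ c2]]] a b c; rewrite MCE.
  have := c2 (emb2 g1 a.2) (emb2 g1 b.2) (emb2 g1 c.2) erefl erefl erefl.
  by rewrite /in_g2 => ->.
- move=> hmc; split; first exact: Tp_LTS.
  split; first exact: Tp_g1.
  split; first by [].
  split.
    by move=> k u v; rewrite /in_g2 /= => -> ->; rewrite scaler0 addr0.
  move=> a b c ha hb hc.
  have ea : a = emb2 g1 a.2 by apply: Geq.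
  have eb : b = emb2 g1 b.2 by apply: Geq.
  have ec : c = emb2 g1 c.2 by apply: Geq.
  have := hmc a b c; rewrite MCE => /(congr1 fst) /= h.
  by rewrite /in_g2 ea eb ec.
Qed.

End Work.

Theorem theorem4p6 (K : fieldType) (hK : [pchar K] =i pred0)
  (g1 g2 : lmodType K) (Th : tri_op g1 g2) (hTh : twilled Th)
  (H : {linear g2 -> g1}) :
  twilled (twist Th H) <-> maurer_cartan Th H.
Proof.
case: (hTh) => hLTS [hg1 hg2].
case: (hLTS) => hL [hA _].
case: (hg1) => _ [_ c1]. case: (hg2) => _ [_ c2].
exact (@main_sec K g1 g2 Th hL hA c1 c2 H hK hLTS hg1).
Qed.
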